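(* Suppose the adversary's distribution $\mathcal D_t$ of $s_t=(x_t,y_t)$ at round $t$ (given the history $s_{1:t-1}$) has $\sigma$-smooth $x$-marginal. Then for algorithm $\mathscr Q^{\mathrm{FTPL}}$ with parameter $n$, $$\chi^2\big(\mathbb E_{s_t\sim\mathcal D_t}[\mathcal Q_{t+1}],\mathcal Q_t\big)\le\frac{2}{\sigma n}.$$
   Context: $\mathcal X$ is a finite set with uniform base measure; a distribution $\mathcal D$ on $\mathcal X$ is $\sigma$-smooth if $\mathcal D(x)\le\frac{1}{\sigma|\mathcal X|}$ for all $x$. Algorithm $\mathscr Q^{\mathrm{FTPL}}$ for a class $\mathcal F\subseteq\{\mathcal X\to[0,1]\}$ with parameters $n,\alpha$: at each round $t$, draw $N^{(t)}\sim\mathrm{Poi}(n)$ and fresh i.i.d. hallucinated samples uniform on $\mathcal X\times\{0,1\}$; set $\tilde h_t=\mathrm{OPT}(\text{hallucinated samples}\cup\{s_\tau\}_{\tau<t})$, where $\mathrm{OPT}$ returns an empirical log-loss minimizer over $\mathcal F$ as a deterministic function of the data multiset; the learner's hypothesis is $h_t=\frac{\tilde h_t+\alpha}{1+2\alpha}$. $\mathcal Q_t$ is the distribution of $h_t$ given $s_{1:t-1}$, $\mathcal Q_{t+1}$ the distribution of $h_{t+1}$ given $s_{1:t}$, and $\mathbb E_{s_t\sim\mathcal D_t}[\mathcal Q_{t+1}]$ the mixture over $s_t$. $\chi^2(P,Q)=\mathbb E_Q[(dP/dQ-1)^2]$. *)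

(* Defs.v *)
From HB Require Import structures.
From mathcomp Require Import all_boot all_order all_algebra.
From mathcomp Require Import all_classical all_reals all_analysis.
Set Implicit Arguments. Unset Strict Implicit. Unset Printing Implicit Defensive.
Import Order.TTheory GRing.Theory Num.Theory.
Local Open Scope classical_set_scope.
Local Open Scope ring_scope.

Section FTPL.
Context {R : realType} {X : finType}.

(* labelled examples s = (x, y) with y in {0,1} (false = 0, true = 1) *)
Definition ex := (X * bool)%type.

Definition counts (s : seq ex) : {ffun ex -> nat} := [ffun z => count_mem z s].

(* pmf of the hallucinated sample sequence: N ~ Poi(n), then N i.i.d. samples
   uniform on X x {0,1}; a sequence s has probability
   Poi(n)(size s) * (1 / (2|X|))^(size s). *)
Definition halluc_pmf (n : R) (s : seq ex) : R :=
  poisson_pmf n (size s) * ((2 * #|X|)%:R ^-1) ^+ size s.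

Definition logloss (h : X -> R) (z : ex) : \bar R :=
  let: (x, y) := z in
  if y then (if h x <= 0 then +oo%E else (- ln (h x))%:E)
  else (if 1 - h x <= 0 then +oo%E else (- ln (1 - h x))%:E).

Definition emp_logloss (h : X -> R) (c : {ffun ex -> nat}) : \bar R :=
  (\sum_(z : ex) (c z)%:R%:E * logloss h z)%E.

Definition is_ERM (F : set (X -> R)) (OPT : {ffun ex -> nat} -> (X -> R)) :=
  forall c, F (OPT c) /\ forall f, F f -> (emp_logloss (OPT c) c <= emp_logloss f c)%E.

(* learner hypothesis computed from the whole data sequence
   (hallucinated samples together with the history) *)
Definition ftpl_hyp (OPT : {ffun ex -> nat} -> (X -> R)) (alpha : R)
  (d : seq ex) : X -> R :=
  fun x => (OPT (counts d) x + alpha) / (1 + 2 * alpha).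

(* distribution of the learner's hypothesis h_t given history hist = s_{1:t-1} *)
Definition Qdist (OPT : {ffun ex -> nat} -> (X -> R)) (n alpha : R)
  (hist : seq ex) (h : X -> R) : \bar R :=
  \esum_(s in [set s : seq ex | ftpl_hyp OPT alpha (s ++ hist) = h])
     (halluc_pmf n s)%:E.

(* chi-square divergence chi^2(P, Q) = E_Q[(dP/dQ - 1)^2] between two
   countably supported distributions given by their pmfs; +oo if P is not
   absolutely continuous w.r.t. Q. *)
Definition chi2 {U : choiceType} (P Q : U -> \bar R) : \bar R :=
  if `[< exists u, Q u = 0%E /\ P u != 0%E >] then +oo%E
  else \esum_(u in [set u | Q u != 0%E])
         (((fine (P u) - fine (Q u)) ^+ 2) / fine (Q u))%:E.

(* sigma-smoothness of the x-marginal of D (uniform base measure on X) *)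
Definition smooth_xmarg (sigma : R) (D : ex -> R) :=
  forall x : X, D (x, false) + D (x, true) <= (sigma * #|X|%:R)^-1.

Definition is_pmf (D : ex -> R) := (forall z, 0 <= D z) /\ \sum_(z : ex) D z = 1.

End FTPL.

(* Main.v *)
Require Import Defs.
From HB Require Import structures.
From mathcomp Require Import all_boot all_order all_algebra.
From mathcomp Require Import all_classical all_reals all_analysis.
From mathcomp Require Import ring lra finmap zify.
Set Implicit Arguments. Unset Strict Implicit. Unset Printing Implicit Defensive.
Import Order.TTheory GRing.Theory Num.Theory.
Local Open Scope classical_set_scope.
Local Open Scope ring_scope.
Lemma nth_rot0 (T : Type) (s : seq T) i x0 : (i < size s)%N ->
  nth x0 (rot i s) 0 = nth x0 s i.
Proof. by move=> H; rewrite /rot nth_cat size_drop subn_gt0 H nth_drop addn0. Qed.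

Lemma comb (R : realType) (T : finType) (k : nat) (D : T -> R)
  (phi : seq T -> R) : (forall a b, perm_eq a b -> phi a = phi b) ->
  \sum_(t : k.+1.-tuple T) (\sum_(x <- t) D x) * phi t
  = k.+1%:R * \sum_(z : T) D z * \sum_(s : k.-tuple T) phi (z :: s).
Proof.
move=> Hphi.
have step3 : forall i : 'I_k.+1, \sum_(t : k.+1.-tuple T) D (tnth t i) * phi t
   = \sum_(t : k.+1.-tuple T) D (thead t) * phi t.
  move=> i.
  have inj : injective (fun t : k.+1.-tuple T => rot_tuple i t).
    by move=> a b /(congr1 val) /= /rot_inj /val_inj.
  rewrite [RHS](reindex_inj inj) /=; apply: eq_bigr => t _.
  congr (D _ * _); last by apply: Hphi; rewrite perm_sym perm_rot.
  rewrite /thead !(tnth_nth (thead t)) /= nth_rot0 // size_tuple //.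
have step5 : \sum_(t : k.+1.-tuple T) D (thead t) * phi t
   = \sum_(z : T) D z * \sum_(s : k.-tuple T) phi (z :: s).
  rewrite (reindex (fun p : T * k.-tuple T => [tuple of p.1 :: p.2])) /=; last first.
    exists (fun t : k.+1.-tuple T => (thead t, [tuple of behead t])).
      by move=> [z s] _ /=; rewrite theadE; congr pair; apply: val_inj.
    by move=> t _; rewrite [RHS]tuple_eta.
  rewrite -(pair_big xpredT xpredT (fun (a : T) (b : k.-tuple T) => D (thead [tuple of a :: b]) * phi (a :: b))) /=; apply: eq_bigr => z _; rewrite mulr_sumr.
  by apply: eq_bigr => s _; rewrite theadE.
under eq_bigr => t _ do rewrite big_tuple mulr_suml.
rewrite exchange_big /=.
under eq_bigr => i _ do rewrite step3.
by rewrite sumr_const card_ord step5 mulr_natl.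
Qed.
Local Open Scope ereal_scope.
Lemma esum_finT (R : realType) (T : finType) (f : T -> \bar R) :
  (forall t, 0 <= f t) -> \esum_(t in [set: T]) f t = \sum_(t : T) f t.
Proof.
move=> f0; rewrite esum_fset ?finite_finset //. rewrite fsbig_finite /=; last exact: finite_finset.
apply: perm_big; apply: uniq_perm; [exact: fset_uniq | exact: index_enum_uniq |] => t.
rewrite in_fset_set; last exact: finite_finset. by rewrite in_setT mem_index_enum. exact: finite_finset.
Qed.

Lemma esum_seq (R : realType) (T : finType) (f : seq T -> \bar R) :
  (forall s, 0 <= f s) ->
  \esum_(s in [set: seq T]) f s = \sum_(k <oo) \sum_(t : k.-tuple T) f t.
Proof.
move=> f0.
have -> : [set: seq T] = \bigcup_k [set s | size s = k].
  by apply/seteqP; split => s //= _; exists (size s).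
rewrite nneseries_sum_bigcup //; last first.
  by move=> i j _ _ [s [/= -> ->]].
apply: eq_eseriesr => k _.
have -> : [set s : seq T | size s = k] = (fun t : k.-tuple T => val t) @` setT.
  apply/seteqP; split => s /=.
    by move=> Hs; exists (Tuple (introT eqP Hs)).
  by move=> [t _ <-]; rewrite size_tuple.
rewrite esum_image; last by move=> a b _ _; apply: val_inj.
by rewrite esum_finT.
Qed.
Local Close Scope ereal_scope.

Section Main.
Variables (R : realType) (X : finType) (n : R) (D : (X * bool)%type -> R).
Hypothesis hn : 0 < n.
Hypothesis hX : (0 < #|X|)%N.
Hypothesis D0 : forall z, 0 <= D z.
Let T := (X * bool)%type.
Definition u : R := ((2 * #|X|)%:R)^-1.
Definition pois k := @poisson_pmf R n k.
Definition q (s : seq T) : R := @halluc_pmf R X n s.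
Definition r (s : seq T) : R := (n * u)^-1 * \sum_(x <- s) D x.

Lemma u_gt0 : 0 < u.
Proof. by rewrite /u invr_gt0 ltr0n muln_gt0 hX. Qed.

Lemma q_tuple k (t : k.-tuple T) : q t = pois k * u ^+ k.
Proof. by rewrite /q /halluc_pmf size_tuple. Qed.

Lemma q_ge0 s : 0 <= q s.
Proof. by rewrite /q /halluc_pmf mulr_ge0 ?poisson_pmf_ge0 // exprn_ge0 // ltW // u_gt0. Qed.

Lemma pois_S k : pois k.+1 = pois k * n / k.+1%:R.
Proof.
rewrite /pois /poisson_pmf hn factS natrM exprS.
have h1 : (k`!)%:R != 0 :> R by rewrite pnatr_eq0 -lt0n fact_gt0.
have h2 : (k.+1)%:R != 0 :> R by rewrite pnatr_eq0.
by field; rewrite h1 andbT addrC natr1.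
Qed.

Lemma perk (phi : seq T -> R) k : (forall a b, perm_eq a b -> phi a = phi b) ->
  \sum_(z : T) D z * \sum_(s : k.-tuple T) q s * phi (z :: s)
  = \sum_(t : k.+1.-tuple T) q t * r t * phi t.
Proof.
move=> Hphi.
transitivity (pois k * u ^+ k * \sum_(z : T) D z * \sum_(s : k.-tuple T) phi (z :: s)).
  rewrite mulr_sumr; apply: eq_bigr => z _.
  rewrite mulrCA; congr (_ * _); rewrite mulr_sumr; apply: eq_bigr => s _.
  by rewrite q_tuple.
transitivity (pois k.+1 * u ^+ k.+1 * (n * u)^-1 *
   \sum_(t : k.+1.-tuple T) (\sum_(x <- t) D x) * phi t); last first.
  rewrite mulr_sumr; apply: eq_bigr => t _.
  by rewrite q_tuple /r !mulrA.
rewrite comb // pois_S.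
have hu : u != 0 by rewrite gt_eqF // u_gt0.
have hn0 : n != 0 by rewrite gt_eqF.
have h2 : (k.+1)%:R != 0 :> R by rewrite pnatr_eq0.
rewrite exprS; field.
by rewrite hu hn0 addrC natr1 h2.
Qed.

Lemma sym (phi : seq T -> R) : (forall s, 0 <= phi s) ->
  (forall a b, perm_eq a b -> phi a = phi b) ->
  (\sum_(z : T) ((D z)%:E * (\esum_(s in [set: seq T]) (q s * phi (z :: s))%:E))
   = (\esum_(t in [set: seq T]) (q t * r t * phi t)%:E))%E.
Proof.
move=> phi0 Hphi.
have r0 s : 0 <= r s.
  rewrite /r mulr_ge0 ?invr_ge0 ?mulr_ge0 ?sumr_ge0 // ?ltW // ?u_gt0 //.
have E1 z : (\esum_(s in [set: seq T]) (q s * phi (z :: s))%:E =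
   \sum_(k <oo) \sum_(t : k.-tuple T) (q t * phi (z :: t))%:E)%E.
  by apply: esum_seq => s; rewrite lee_fin mulr_ge0 // q_ge0.
under eq_bigr => z _ do rewrite E1.
have qrp0 (s : seq T) : (0 <= (q s * r s * phi s)%:E)%E.
  by rewrite lee_fin; apply: mulr_ge0; [apply: mulr_ge0; [exact: q_ge0|exact: r0]|exact: phi0].
rewrite esum_seq; last by move=> s; exact: qrp0.
have E2 z : (\sum_(k <oo) ((D z)%:E * \sum_(t : k.-tuple T) (q t * phi (z :: t))%:E) =
    (D z)%:E * \sum_(k <oo) \sum_(t : k.-tuple T) (q t * phi (z :: t))%:E)%E.
  apply: nneseriesZl => k _; apply: sume_ge0 => t _.
  by rewrite lee_fin mulr_ge0 // q_ge0.
under eq_bigr => z _ do rewrite -E2.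
rewrite -nneseries_sum; last first.
  move=> z k _; rewrite mule_ge0 ?lee_fin // sume_ge0 // => t _.
  by rewrite lee_fin mulr_ge0 // q_ge0.
rewrite [RHS](nneseries_split 0 1); last first.
  by move=> k _; apply: sume_ge0 => t _; exact: qrp0.
rewrite big_nat1 add0n.
rewrite big1 ?add0e; last first.
  by move=> t _; rewrite tuple0 /r big_nil mulr0 mulr0 mul0r.
rewrite -(@nneseries_addn R (fun k => (\sum_(t : k.-tuple T) (q t * r t * phi t)%:E)%E) 1); last first.
  by move=> k; apply: sume_ge0 => t _; exact: qrp0.
apply: eq_eseriesr => k _.
rewrite sumEFin addn1 -perk //.
under eq_bigr => z _ do rewrite sumEFin -EFinM.
by rewrite sumEFin.
Qed.

Lemma mass : (\esum_(t in [set: seq T]) (q t)%:E = 1)%E.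
Proof.
rewrite esum_seq; last by move=> s; rewrite lee_fin q_ge0.
transitivity (\sum_(k <oo) (pois k)%:E)%E.
  apply: eq_eseriesr => k _.
  rewrite sumEFin; congr EFin.
  under eq_bigr => t _ do rewrite q_tuple.
  rewrite sumr_const card_tuple card_prod card_bool -mulr_natr -mulrA.
  suff -> : u ^+ k * ((#|X| * 2) ^ k)%:R = 1 by rewrite mulr1.
  rewrite natrX -exprMn /u mulnC mulVf ?expr1n //.
  by rewrite pnatr_eq0 muln_eq0 negb_or /= -lt0n hX.
rewrite nneseries_esumT; last by move=> k; rewrite lee_fin poisson_pmf_ge0.
have H : (poisson_prob n 0%N [set: nat] = 1)%E.
  exact: (@probability_setT _ _ _ (poisson_prob n 0%N)).
by move: H; rewrite /poisson_prob hn /pois.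
Qed.

Hypothesis D1 : \sum_(z : T) D z = 1.

Lemma r_ge0 s : 0 <= r s.
Proof. by rewrite /r mulr_ge0 ?invr_ge0 ?mulr_ge0 ?sumr_ge0 // ?ltW // ?u_gt0. Qed.

Lemma r_perm a b : perm_eq a b -> r a = r b.
Proof. by move=> H; rewrite /r (perm_big _ H). Qed.

Lemma r_cons z s : r (z :: s) = r s + (n * u)^-1 * D z.
Proof. by rewrite /r big_cons mulrDr addrC. Qed.

Lemma esumZ_seq (c : R) (f : seq T -> R) : 0 <= c -> (forall s, 0 <= f s) ->
  (\esum_(s in [set: seq T]) (c * f s)%:E = c%:E * \esum_(s in [set: seq T]) (f s)%:E)%E.
Proof.
move=> c0 f0.
rewrite esum_seq; last by move=> s; rewrite lee_fin mulr_ge0.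
rewrite esum_seq; last by move=> s; rewrite lee_fin.
rewrite -nneseriesZl; last by move=> k _; apply: sume_ge0 => t _; rewrite lee_fin.
by apply: eq_eseriesr => k _; rewrite !sumEFin -EFinM mulr_sumr.
Qed.

Lemma esumZr_seq (c : R) (f : seq T -> R) : 0 <= c -> (forall s, 0 <= f s) ->
  (\esum_(s in [set: seq T]) (f s * c)%:E = c%:E * \esum_(s in [set: seq T]) (f s)%:E)%E.
Proof.
move=> c0 f0; rewrite -esumZ_seq //.
by apply: eq_esum => s _; rewrite mulrC.
Qed.

Lemma mass_r : (\esum_(t in [set: seq T]) (q t * r t)%:E = 1)%E.
Proof.
have H := sym (phi := fun=> 1) (fun=> ler01) (fun _ _ _ => erefl).
have -> : (\esum_(t in [set: seq T]) (q t * r t)%:E = \esum_(t in [set: seq T]) (q t * r t * 1)%:E)%E.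
  by apply: eq_esum => t _; rewrite mulr1.
rewrite -H.
have -> : (\esum_(s in [set: seq T]) (q s * 1)%:E = 1)%E.
  by rewrite -mass; apply: eq_esum => t _; rewrite mulr1.
under eq_bigr => z _ do rewrite mule1.
by rewrite sumEFin D1.
Qed.

Lemma mass_r2 : (\esum_(t in [set: seq T]) (q t * r t ^+ 2)%:E
   = (1 + (n * u)^-1 * \sum_(z : T) D z ^+ 2)%:E)%E.
Proof.
have H := sym (phi := r) r_ge0 r_perm.
have -> : (\esum_(t in [set: seq T]) (q t * r t ^+ 2)%:E = \esum_(t in [set: seq T]) (q t * r t * r t)%:E)%E.
  by apply: eq_esum => t _; rewrite -mulrA -expr2.
rewrite -H.
have lam0 : 0 <= (n * u)^-1 by rewrite invr_ge0 mulr_ge0 // ltW // u_gt0.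
under eq_bigr => z _.
  under eq_esum => s _ do rewrite r_cons mulrDr EFinD.
  rewrite esumD; last 2 first.
  - by move=> s _; rewrite lee_fin mulr_ge0 ?r_ge0 ?q_ge0.
  - by move=> s _; rewrite lee_fin; apply: mulr_ge0; [exact: q_ge0 | exact: mulr_ge0].
  rewrite mass_r esumZr_seq ?mulr_ge0 //; last by move=> s; exact: q_ge0.
  rewrite mass mule1 -EFinD -EFinM.
  over.
rewrite sumEFin; congr EFin.
rewrite mulr_sumr -[in RHS]D1 -big_split /=; apply: eq_bigr => z _.
by rewrite expr2; ring.
Qed.

Lemma var_r : (\esum_(t in [set: seq T]) (q t * (r t - 1) ^+ 2)%:E
   = ((n * u)^-1 * \sum_(z : T) D z ^+ 2)%:E)%E.
Proof.
have E : (\esum_(t in [set: seq T]) ((q t * (r t - 1) ^+ 2)%:E + ((q t * r t)%:E + (q t * r t)%:E))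
       = \esum_(t in [set: seq T]) ((q t * r t ^+ 2)%:E + (q t)%:E))%E.
  apply: eq_esum => t _; rewrite -!EFinD; congr EFin; ring.
have qr0 t : (0 <= (q t * r t)%:E)%E by rewrite lee_fin mulr_ge0 ?q_ge0 ?r_ge0.
have a0 t : (0 <= (q t * (r t - 1) ^+ 2)%:E)%E by rewrite lee_fin mulr_ge0 ?q_ge0 ?sqr_ge0.
have qr20 t : (0 <= (q t * r t ^+ 2)%:E)%E by rewrite lee_fin mulr_ge0 ?q_ge0 ?sqr_ge0.
have q0 t : (0 <= (q t)%:E)%E by rewrite lee_fin q_ge0.
rewrite (esumD (fun t _ => a0 t) (fun t _ => adde_ge0 (qr0 t) (qr0 t))) in E.
rewrite (esumD (fun t _ => qr0 t) (fun t _ => qr0 t)) in E.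
rewrite (esumD (fun t _ => qr20 t) (fun t _ => q0 t)) in E.
rewrite mass_r mass_r2 mass in E.
move: E; set S := esum _ _.
have S0 : (0 <= S)%E by apply: esum_ge0 => t _; rewrite lee_fin mulr_ge0 ?q_ge0 ?sqr_ge0.
case: S S0 => [x| |] // _.
  rewrite -!EFinD => -[E]; congr EFin; lra.
Qed.

Lemma cs (w : seq T -> R) (Q P : R) : (forall t, 0 <= w t) ->
  (\esum_(t in [set: seq T]) (w t)%:E = Q%:E)%E ->
  (\esum_(t in [set: seq T]) (w t * r t)%:E = P%:E)%E -> 0 < Q ->
  (((P - Q) ^+ 2 / Q)%:E <= \esum_(t in [set: seq T]) (w t * (r t - 1) ^+ 2)%:E)%E.
Proof.
move=> w0 HQ HP Q0.
have P0 : 0 <= P.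
  rewrite -lee_fin -HP; apply: esum_ge0 => t _.
  by rewrite lee_fin mulr_ge0 ?r_ge0.
set d := P / Q.
have d0 : 0 <= d by rewrite divr_ge0 // ltW.
have wr0 t : 0 <= w t * r t by rewrite mulr_ge0 ?r_ge0.
have H1 : (\esum_(t in [set: seq T]) ((w t * r t * (2 * d))%:E + (w t)%:E) <=
   \esum_(t in [set: seq T]) ((w t * (r t - 1) ^+ 2)%:E +
      ((w t * r t * 2)%:E + (w t * d ^+ 2)%:E)))%E.
  apply: le_esum => t _; rewrite -!EFinD lee_fin.
  have := sqr_ge0 (r t - d); have := w0 t; nra.
have a0 t : (0 <= (w t * (r t - 1) ^+ 2)%:E)%E by rewrite lee_fin mulr_ge0 ?sqr_ge0.
have b0 t : (0 <= (w t * r t * 2)%:E)%E by rewrite lee_fin mulr_ge0.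
have c0 t : (0 <= (w t * d ^+ 2)%:E)%E by rewrite lee_fin mulr_ge0 ?sqr_ge0.
have e0 t : (0 <= (w t * r t * (2 * d))%:E)%E by rewrite lee_fin mulr_ge0 // mulr_ge0.
have f0 t : (0 <= (w t)%:E)%E by rewrite lee_fin.
rewrite (esumD (fun t _ => e0 t) (fun t _ => f0 t)) in H1.
rewrite (esumD (fun t _ => a0 t) (fun t _ => adde_ge0 (b0 t) (c0 t))) in H1.
rewrite (esumD (fun t _ => b0 t) (fun t _ => c0 t)) in H1.
rewrite (@esumZr_seq (2 * d)) in H1; [|by rewrite mulr_ge0|by []].
rewrite (@esumZr_seq 2) in H1; [|by []|by []].
rewrite (@esumZr_seq (d ^+ 2)) in H1; [|by rewrite sqr_ge0|by []].
rewrite HP HQ in H1.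
move: H1; set S := esum _ _.
have S0 : (0 <= S)%E by apply: esum_ge0 => t _; exact: a0.
case: S S0 => [x| |] // _.
  rewrite -!EFinM -!EFinD !lee_fin => H1.
  have -> : (P - Q) ^+ 2 / Q = 2 * d * P + Q - (2 * P + d ^+ 2 * Q).
    by rewrite /d; field; rewrite gt_eqF.
  lra.
move=> _; exact: leey.
Qed.
End Main.

Lemma sum_ind (R : realType) (U : eqType) (x : U) (s : seq U) :
  \sum_(h <- s) ((x == h)%:R : R) = (count_mem x s)%:R.
Proof.
elim: s => [|h s IH]; first by rewrite big_nil.
by rewrite big_cons IH /= natrD eq_sym.
Qed.

Lemma part (R : realType) (V : choiceType) (U : choiceType) (hyp : V -> U)
  (g : V -> R) (I : set U) : (forall t, 0 <= g t) ->
  (\esum_(h in I) \esum_(t in [set: V]) (g t * (hyp t == h)%:R)%:E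
    <= \esum_(t in [set: V]) (g t)%:E)%E.
Proof.
move=> g0.
apply: ge_ereal_sup => _ [H [finH HI] <-].
rewrite fsbig_finite //= -esum_sum; last first.
  by move=> t h _ _; rewrite lee_fin mulr_ge0.
apply: le_esum => t _; rewrite sumEFin lee_fin -mulr_sumr sum_ind.
rewrite count_uniq_mem; last exact: fset_uniq.
by case: (_ \in _); rewrite ?mulr1 ?mulr0.
Qed.

Lemma counts_perm (X : finType) (a b : seq (X * bool)) : perm_eq a b -> counts a = counts b.
Proof. by move/permP => H; apply/ffunP => z; rewrite !ffunE H. Qed.

Theorem lemma4p5 (R : realType) (X : finType) (F : set (X -> R))
  (OPT : {ffun (X * bool)%type -> nat} -> (X -> R)) (n alpha sigma : R)
  (hist : seq (X * bool)) (D : (X * bool)%type -> R) :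
  (0 < #|X|)%N ->
  (forall f, F f -> forall x, 0 <= f x <= 1) ->
  is_ERM F OPT ->
  0 < n -> 0 <= alpha -> 0 < sigma ->
  is_pmf D -> smooth_xmarg sigma D ->
  (chi2 (fun h => \sum_(z : X * bool) (D z)%:E * Qdist OPT n alpha (rcons hist z) h)
        (Qdist OPT n alpha hist)
   <= (2 / (sigma * n))%:E)%E.
Proof.
move=> hX _ _ hn _ hs [D0 D1] hsm.
pose hyp (t : seq (X * bool)) := ftpl_hyp OPT alpha (t ++ hist).
have hyp_perm a b : perm_eq a b -> hyp a = hyp b.
  by move=> H; rewrite /hyp /ftpl_hyp (counts_perm (_ : perm_eq (a ++ hist) (b ++ hist))) // perm_cat2r.
have hyp_cons s z : ftpl_hyp OPT alpha (s ++ rcons hist z) = hyp (z :: s).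
  rewrite /hyp /ftpl_hyp (counts_perm (_ : perm_eq (s ++ rcons hist z) ((z :: s) ++ hist))) //.
  apply/permP => a; rewrite /= -cats1 !count_cat /=; lia.
have HQ h : Qdist OPT n alpha hist h =
    (\esum_(t in [set: seq (X * bool)]) (q n t * (hyp t == h)%:R)%:E)%E.
  rewrite /Qdist esum_mkcond; apply: eq_esum => t _.
  case: (eqVneq (hyp t) h) => E.
    by rewrite mem_set ?mulr1.
  rewrite ifF ?mulr0 //; apply/negP => /set_mem /= H.
  by move: E; rewrite /hyp H eqxx.
have HP h : (\sum_(z : X * bool) (D z)%:E * Qdist OPT n alpha (rcons hist z) h =
    \esum_(t in [set: seq (X * bool)]) (q n t * r n D t * (hyp t == h)%:R)%:E)%E.
  rewrite -(sym hn hX D0 (phi := fun t => (hyp t == h)%:R)); last 2 first.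
  - by move=> s; case: (_ == _).
  - by move=> a b /hyp_perm ->.
  apply: eq_bigr => z _; congr (_ * _)%E.
  rewrite /Qdist esum_mkcond; apply: eq_esum => t _.
  case: (eqVneq (hyp (z :: t)) h) => E.
    by rewrite mem_set ?mulr1 //= hyp_cons.
  rewrite ifF ?mulr0 //; apply/negP => /set_mem /= H.
  by move: E; rewrite -hyp_cons H eqxx.
have mr := mass_r hn hX D0 D1.
have ms := mass hn hX.
have ind01 t h : 0 <= ((hyp t == h)%:R : R) <= 1 by case: (_ == _); rewrite ?lexx ?ler01.
have Qb h : (0 <= Qdist OPT n alpha hist h <= 1)%E.
  rewrite HQ; apply/andP; split.
    apply: esum_ge0 => t _; rewrite lee_fin.
    apply: mulr_ge0; [exact: q_ge0 | by case/andP: (ind01 t h)].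
  rewrite -ms; apply: le_esum => t _; rewrite lee_fin.
  apply: ler_piMr; [exact: q_ge0 | by case/andP: (ind01 t h)].
have Pb h : (0 <= \sum_(z : X * bool) (D z)%:E * Qdist OPT n alpha (rcons hist z) h <= 1)%E.
  rewrite HP; apply/andP; split.
    apply: esum_ge0 => t _; rewrite lee_fin.
    apply: mulr_ge0; [apply: mulr_ge0; [exact: q_ge0 | exact: (r_ge0 hn hX D0)] | by case/andP: (ind01 t h)].
  rewrite -mr; apply: le_esum => t _; rewrite lee_fin.
  apply: ler_piMr; [apply: mulr_ge0; [exact: q_ge0 | exact: (r_ge0 hn hX D0)] | by case/andP: (ind01 t h)].
rewrite /chi2.
case: asboolP => [[h [Q0 P0]] | _].
  exfalso; move: P0; rewrite HP; apply/negP; rewrite negbK; apply/eqP.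
  apply: esum1 => t _.
  have : ((q n t * (hyp t == h)%:R)%:E <= Qdist OPT n alpha hist h)%E.
    rewrite HQ; apply: esum_ge; exists [set t].
      by split; [exact: finite_set1 | by []].
    by rewrite fsbig_set1.
  rewrite Q0 lee_fin => H.
  have H0 : q n t * (hyp t == h)%:R = 0.
    apply/eqP; rewrite eq_le H mulr_ge0 ?q_ge0 //; by case/andP: (ind01 t h).
  by congr EFin; rewrite mulrAC H0 mul0r.
have r0 := r_ge0 hn hX D0.
apply: (@le_trans _ _ (\esum_(h in [set h | Qdist OPT n alpha hist h != 0%E])
   \esum_(t in [set: seq (X * bool)])
     ((q n t * (r n D t - 1) ^+ 2) * (hyp t == h)%:R)%:E)%E).
  apply: le_esum => h /= Qh0.
  set Qh := Qdist OPT n alpha hist h.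
  set Ph := (\sum_(z : X * bool) _)%E.
  have /andP[Qh0' Qh1] := Qb h.
  have /andP[Ph0 Ph1] := Pb h.
  have Qfin : Qh \is a fin_num by rewrite ge0_fin_numE // (le_lt_trans Qh1) ?ltry.
  have Pfin : Ph \is a fin_num by rewrite ge0_fin_numE // (le_lt_trans Ph1) ?ltry.
  have Qpos : 0 < fine Qh.
    rewrite -lte_fin fineK // lt_neqAle Qh0' andbT eq_sym //.
  have := cs hn hX D0 (w := fun t => q n t * (hyp t == h)%:R) (Q := fine Qh) (P := fine Ph).
  move=> /(_ _ _ _ Qpos) H.
  have -> : (\esum_(t in [set: seq (X * bool)])
     ((q n t * (r n D t - 1) ^+ 2) * (hyp t == h)%:R)%:E
     = \esum_(t in [set: seq (X * bool)]) (q n t * (hyp t == h)%:R * (r n D t - 1) ^+ 2)%:E)%E.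
    by apply: eq_esum => t _; rewrite mulrAC.
  apply: H.
  - move=> t; apply: mulr_ge0; [exact: q_ge0 | by case/andP: (ind01 t h)].
  - by rewrite fineK // /Qh HQ.
  - rewrite fineK // /Ph HP; apply: eq_esum => t _; by rewrite mulrAC.
apply: le_trans (part hyp (g := fun t => q n t * (r n D t - 1) ^+ 2) _ _) _.
  by move=> t; rewrite mulr_ge0 ?q_ge0 ?sqr_ge0.
rewrite (var_r hn hX D0 D1) lee_fin.
set M := (sigma * #|X|%:R)^-1.
have Dle z : D z <= M.
  case: z => x b; have := hsm x; have := D0 (x, false); have := D0 (x, true).
  by rewrite /M; case: b => /= *; lra.
have S2 : \sum_(z : X * bool) D z ^+ 2 <= M.
  apply: (@le_trans _ _ (\sum_(z : X * bool) D z * M)).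
    by apply: ler_sum => z _; rewrite expr2 ler_wpM2l.
  by rewrite -mulr_suml D1 mul1r.
have hu : 0 < u R X by exact: u_gt0.
apply: (@le_trans _ _ ((n * u R X)^-1 * M)).
  by rewrite ler_wpM2l // invr_ge0 mulr_ge0 // ltW.
have hX0 : #|X|%:R != 0 :> R by rewrite pnatr_eq0 -lt0n.
rewrite /M /u natrM le_eqVlt; apply/orP; left; apply/eqP.
by field; rewrite hX0 !gt_eqF.
Qed.
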